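(* Let $r\ge0$ and let $Q_i,P_i\in\mathfrak{gl}_m$, $i=0,\dots,r$, be canonical coordinates with Poisson brackets $\{P_i\overset{\otimes}{,}Q_j\}=\delta_{ij}\Pi$, $\{P_i\overset{\otimes}{,}P_j\}=\{Q_i\overset{\otimes}{,}Q_j\}=0$. Define $A_k=\sum_{i=0}^{r-k}Q_iP_{i+k}$ for $k=0,\dots,r$. Then $$\{A_k\overset{\otimes}{,}A_l\}=\begin{cases}-[\Pi,A_{k+l}\otimes\mathbb I],&k+l\le r,\\0,&k+l>r.\end{cases}$$
   Context: $\{X\overset{\otimes}{,}Y\}=\sum_{a,b,c,d}\{X_{ab},Y_{cd}\}E_{ab}\otimes E_{cd}$, $\Pi=\sum_{a,b}E_{ab}\otimes E_{ba}$ (permutation operator). The resulting bracket is the standard Lie–Poisson bracket on the dual of the Takiff algebra $\mathfrak{gl}_m[z]/z^{r+1}$, for elements $\sum_kA_kz^{-k-1}$. *)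

(* Defs.v *)
From HB Require Import structures.
From mathcomp Require Import all_boot all_order all_algebra.
Set Implicit Arguments. Unset Strict Implicit. Unset Printing Implicit Defensive.
Import GRing.Theory.
Local Open Scope ring_scope.

Definition poisson_bracket (K : fieldType) (R : comAlgType K)
  (br : R -> R -> R) : Prop :=
  [/\ forall x y z, br (x + y) z = br x z + br y z,
      forall (c : K) x y, br (c *: x) y = c *: br x y,
      forall x y, br x y = - br y x,
      forall x y z, br (x * y) z = x * br y z + br x z * y
    & forall x y z, br x (br y z) + br y (br z x) + br z (br x y) = 0].

(* Elements of gl_m (x) gl_m with coefficients in R:
   T a b c d is the coefficient of E_ab (x) E_cd. *)
Definition tensor (R : Type) (m : nat) := 'I_m -> 'I_m -> 'I_m -> 'I_m -> R.

(* {X (x), Y} = sum {X_ab, Y_cd} E_ab (x) E_cd *)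
Definition tbr (R : Type) (m : nat) (br : R -> R -> R) (X Y : 'M[R]_m)
  : tensor R m := fun a b c d => br (X a b) (Y c d).

Definition Pi (R : pzRingType) (m : nat) : tensor R m :=
  fun a b c d => ((a == d) && (b == c))%:R.

Definition tens (R : pzRingType) (m : nat) (X Y : 'M[R]_m) : tensor R m :=
  fun a b c d => X a b * Y c d.

(* product in gl_m (x) gl_m: (X(x)Y)(Z(x)W) = XZ (x) YW *)
Definition tmul (R : pzRingType) (m : nat) (S T : tensor R m) : tensor R m :=
  fun a b c d => \sum_(e < m) \sum_(f < m) S a e c f * T e b f d.

Definition tadd (R : pzRingType) (m : nat) (S T : tensor R m) : tensor R m :=
  fun a b c d => S a b c d + T a b c d.
Definition topp (R : pzRingType) (m : nat) (S : tensor R m) : tensor R m :=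
  fun a b c d => - S a b c d.
Definition tzero (R : pzRingType) (m : nat) : tensor R m := fun _ _ _ _ => 0.

Definition tcomm (R : pzRingType) (m : nat) (S T : tensor R m) : tensor R m :=
  tadd (tmul S T) (topp (tmul T S)).

Definition Aop (R : pzRingType) (m r : nat) (Q P : nat -> 'M[R]_m) (k : nat)
  : 'M[R]_m := \sum_(i < (r - k).+1) Q i *m P (i + k)%N.

(* Main.v *)
Require Import Defs.
From HB Require Import structures.
From mathcomp Require Import all_boot all_order all_algebra.
From mathcomp Require Import ring zify.
From Stdlib Require Import FunctionalExtensionality.
Set Implicit Arguments. Unset Strict Implicit.
Import GRing.Theory.
Local Open Scope ring_scope.

Section Br.
Variables (K : fieldType) (R : comAlgType K) (br : R -> R -> R).
Hypothesis hb : poisson_bracket br.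

Lemma brDl x y z : br (x + y) z = br x z + br y z.
Proof. by case: hb. Qed.
Lemma brC x y : br x y = - br y x.
Proof. by case: hb. Qed.
Lemma brM x y z : br (x * y) z = x * br y z + br x z * y.
Proof. by case: hb. Qed.
Lemma br0l y : br 0 y = 0.
Proof. have := brDl 0 0 y; rewrite addr0.
by move/(congr1 (fun t => t - br 0 y)); rewrite subrr addrK => <-. Qed.
Lemma brDr x y z : br z (x + y) = br z x + br z y.
Proof. by rewrite brC brDl opprD -!brC. Qed.
Lemma br0r y : br y 0 = 0.
Proof. by rewrite brC br0l oppr0. Qed.

Lemma br_suml I (s : seq I) (F : I -> R) y :
  br (\sum_(i <- s) F i) y = \sum_(i <- s) br (F i) y.
Proof. exact: (big_morph (fun x => br x y) (fun a b => brDl a b y) (br0l y)). Qed.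
Lemma br_sumr I (s : seq I) (F : I -> R) y :
  br y (\sum_(i <- s) F i) = \sum_(i <- s) br y (F i).
Proof. exact: (big_morph (fun x => br y x) (fun a b => brDr a b y) (br0r y)). Qed.

Lemma br_mul2 x y z w : br x z = 0 -> br y w = 0 ->
  br (x * y) (z * w) = x * br y z * w - z * br w x * y.
Proof.
move=> h1 h2.
rewrite brM (brC y) brM (brC x) brM (brC w y) h2 (brC z x) h1.
rewrite (brC z y); ring.
Qed.
End Br.

Section Sums.
Variables (R : comNzRingType) (m : nat).

Lemma sum_if_ord n (x : nat) (G : nat -> R) :
  \sum_(j < n) (if x == (j : nat) then G j else 0) = if (x < n)%N then G x else 0.
Proof.
case: ifP => h.
  rewrite (bigD1 (Ordinal h)) //= eqxx big1 ?addr0 // => j hj.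
  case: eqP => // hx; exfalso; move/negP: hj; apply; apply/eqP; exact: val_inj.
apply: big1 => j _; case: eqP => // hx; move: h; by rewrite hx ltn_ord.
Qed.

Lemma sumf (e : 'I_m) (bb : bool) x (y : 'I_m -> R) :
  \sum_(f < m) x * (((e == f) && bb)%:R) * y f = bb%:R * x * y e.
Proof.
rewrite (bigD1 e) //= big1 ?eqxx ?addr0; first by ring.
by move=> f hf; rewrite eq_sym (negbTE hf) /= mulr0 mul0r.
Qed.

Lemma swap4 n1 n2 (F : 'I_n1 -> 'I_m -> 'I_n2 -> 'I_m -> R) :
  \sum_i \sum_e \sum_j \sum_f F i e j f = \sum_j \sum_f \sum_i \sum_e F i e j f.
Proof.
under eq_bigr => i _ do rewrite exchange_big.
rewrite exchange_big; apply: eq_bigr => j _.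
under eq_bigr => i _ do rewrite exchange_big.
by rewrite exchange_big.
Qed.

Lemma keyS (Q P : nat -> 'M[R]_m) n1 n2 s t (a b c d : 'I_m) :
  \sum_(i < n1) \sum_(e < m) \sum_(j < n2) \sum_(f < m)
     Q i a e * (if (i + s)%N == (j : nat) then ((e == f) && (b == c))%:R else 0) * P (j + t)%N f d
  = (b == c)%:R * \sum_(i < n1 | (i + s < n2)%N) \sum_(e < m) Q i a e * P (i + s + t)%N e d.
Proof.
rewrite [RHS]mulr_sumr [RHS]big_mkcond; apply: eq_bigr => i _.
have H : forall e : 'I_m, \sum_(j < n2) \sum_(f < m)
     Q i a e * (if (i + s)%N == (j : nat) then ((e == f) && (b == c))%:R else 0) * P (j + t)%N f d
   = \sum_(j < n2) (if (i + s)%N == (j : nat) then (b == c)%:R * Q i a e * P (j + t)%N e d else 0).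
  move=> e; apply: eq_bigr => j _; case: eqP => hj.
    by rewrite sumf.
  by apply: big1 => f _; rewrite mulr0 mul0r.
under eq_bigr => e _ do rewrite H.
under eq_bigr => e _ do rewrite (sum_if_ord _ _ (fun j => (b == c)%:R * Q i a e * P (j + t)%N e d)).
case: ifP => h; last by rewrite big1.
by rewrite mulr_sumr; apply: eq_bigr => e _; rewrite mulrA.
Qed.

Lemma cond_sum (F : nat -> R) r k l : (k <= r)%N -> (l <= r)%N ->
  \sum_(i < (r - k).+1 | (i + k < (r - l).+1)%N) F i
  = if (k + l <= r)%N then \sum_(i < (r - (k + l)).+1) F i else 0.
Proof.
move=> hk hl; case: ifP => h.
  rewrite (big_ord_widen_cond (r - k).+1 xpredT F); last by lia.
  by apply: eq_bigl => i /=; apply/idP/idP; lia.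
by apply: big1 => i hi; exfalso; move: hi h; lia.
Qed.
End Sums.

Section Pi.
Variables (R : comNzRingType) (m : nat).
Lemma L1 (M : 'M[R]_m) a b c d :
  \sum_(e < m) \sum_(f < m) ((a == f) && (e == c))%:R * (M e b * (1%:M : 'M[R]_m) f d)
  = (a == d)%:R * M c b.
Proof.
rewrite (bigD1 c) //= [X in _ + X]big1 ?addr0 => [|e /negbTE he]; last first.
  by apply: big1 => f _; rewrite he andbF mul0r.
rewrite (bigD1 a) //= big1 ?addr0 => [|f /negbTE hf]; last by rewrite (eq_sym a f) hf mul0r.
by rewrite !eqxx mxE /= mul1r; case: (a == d); rewrite ?mulr1 ?mulr0 ?mul1r ?mul0r.
Qed.
Lemma L2 (M : 'M[R]_m) a b c d :
  \sum_(e < m) \sum_(f < m) (M a e * (1%:M : 'M[R]_m) c f) * ((e == d) && (b == f))%:R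
  = (b == c)%:R * M a d.
Proof.
rewrite (bigD1 d) //= [X in _ + X]big1 ?addr0 => [|e /negbTE he]; last first.
  by apply: big1 => f _; rewrite he /= mulr0.
rewrite (bigD1 b) //= big1 ?addr0 => [|f /negbTE hf]; last by rewrite (eq_sym b f) hf andbF mulr0.
by rewrite !eqxx mxE /= mulr1 eq_sym; case: (b == c); rewrite ?mulr1 ?mulr0 ?mul1r ?mul0r.
Qed.
End Pi.

Lemma Aentry (R : pzRingType) m r (Q P : nat -> 'M[R]_m) k a b :
  Aop r Q P k a b = \sum_(i < (r - k).+1) \sum_(e < m) Q i a e * P (i + k)%N e b.
Proof. by rewrite /Aop summxE; apply: eq_bigr => i _; rewrite mxE. Qed.

Theorem theorem2p5 (K : fieldType) (R : comAlgType K) (br : R -> R -> R)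
  (m r : nat) (Q P : nat -> 'M[R]_m) :
  poisson_bracket br ->
  (forall i j, (i <= r)%N -> (j <= r)%N ->
     tbr br (P i) (Q j) = (if i == j then @Pi R m else @tzero R m)) ->
  (forall i j, (i <= r)%N -> (j <= r)%N -> tbr br (P i) (P j) = @tzero R m) ->
  (forall i j, (i <= r)%N -> (j <= r)%N -> tbr br (Q i) (Q j) = @tzero R m) ->
  forall k l, (k <= r)%N -> (l <= r)%N ->
    tbr br (Aop r Q P k) (Aop r Q P l) =
    (if (k + l <= r)%N
     then topp (tcomm (@Pi R m) (tens (Aop r Q P (k + l)%N) 1%:M))
     else @tzero R m).
Proof.
move=> hb hPQ hPP hQQ k l hk hl.
have ePQ u v e b c f : (u <= r)%N -> (v <= r)%N ->
    br (P u e b) (Q v c f) = if u == v then ((e == f) && (b == c))%:R else 0.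
  move=> hu hv; have := congr1 (fun T => T e b c f) (hPQ u v hu hv).
  by rewrite /tbr /= => ->; case: eqP.
have ePP u v e b c f : (u <= r)%N -> (v <= r)%N -> br (P u e b) (P v c f) = 0.
  by move=> hu hv; have := congr1 (fun T => T e b c f) (hPP u v hu hv).
have eQQ u v e b c f : (u <= r)%N -> (v <= r)%N -> br (Q u e b) (Q v c f) = 0.
  by move=> hu hv; have := congr1 (fun T => T e b c f) (hQQ u v hu hv).
apply: functional_extensionality => a; apply: functional_extensionality => b.
apply: functional_extensionality => c; apply: functional_extensionality => d.
rewrite /tbr !Aentry (br_suml hb).
under eq_bigr => i _ do rewrite (br_suml hb).
under eq_bigr => i _ do under eq_bigr => e _ do rewrite (br_sumr hb).
under eq_bigr => i _ do under eq_bigr => e _ do under eq_bigr => j _ do rewrite (br_sumr hb).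
have -> : \sum_(i < (r - k).+1) \sum_(e < m) \sum_(j < (r - l).+1) \sum_(f < m)
   br (Q i a e * P (i + k)%N e b) (Q j c f * P (j + l)%N f d)
 = \sum_(i < (r - k).+1) \sum_(e < m) \sum_(j < (r - l).+1) \sum_(f < m)
     Q i a e * (if (i + k)%N == (j : nat) then ((e == f) && (b == c))%:R else 0) * P (j + l)%N f d
 - \sum_(i < (r - k).+1) \sum_(e < m) \sum_(j < (r - l).+1) \sum_(f < m)
     Q j c f * (if (j + l)%N == (i : nat) then ((f == e) && (d == a))%:R else 0) * P (i + k)%N e b.
  rewrite -sumrB; apply: eq_bigr => i _; rewrite -sumrB; apply: eq_bigr => e _.
  rewrite -sumrB; apply: eq_bigr => j _; rewrite -sumrB; apply: eq_bigr => f _.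
  have hi := ltn_ord i; have hj := ltn_ord j.
  rewrite (br_mul2 hb); last 2 first.
  - by apply: eQQ; lia.
  - by apply: ePP; lia.
  by rewrite !ePQ //; lia.
rewrite keyS swap4 keyS.
rewrite (cond_sum (fun i => \sum_(e < m) Q i a e * P (i + k + l)%N e d)) //.
rewrite (cond_sum (fun i => \sum_(e < m) Q i c e * P (i + l + k)%N e b)) //.
rewrite (addnC l k).
case: ifP => hkl; last by rewrite /tzero !mulr0 subrr.
rewrite /topp /tcomm /tadd /tmul /tens /Pi L1 /topp L2 !Aentry.
have -> : \sum_(i < (r - (k + l)).+1) \sum_(e < m) Q i c e * P (i + l + k)%N e b
  = \sum_(i < (r - (k + l)).+1) \sum_(e < m) Q i c e * P (i + (k + l))%N e b.
  by apply: eq_bigr => i _; rewrite -addnA (addnC l k).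
have -> : \sum_(i < (r - (k + l)).+1) \sum_(e < m) Q i a e * P (i + k + l)%N e d
  = \sum_(i < (r - (k + l)).+1) \sum_(e < m) Q i a e * P (i + (k + l))%N e d.
  by apply: eq_bigr => i _; rewrite -addnA.
rewrite (eq_sym d a).
set X := \sum_(i < _) _.
set Y := \sum_(i < _) _.
by rewrite opprB.
Qed.
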